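(* For every knot type $[K]$, $\dfrac{3+\sqrt{9+8\,c[K]}}{2}\le \mathrm{pl}[K]$, where $c[K]$ is the crossing number of $[K]$.
   Context: The crossing number $c[K]$ is the minimum number of crossings in a diagram of $[K]$. A planar stick diagram of $[K]$ is a closed polygonal curve in the plane (finitely many straight line segments, called edges, joined end to end), whose self-intersections are transverse double points in the interiors of edges, with over/under crossing information at each self-intersection, representing $[K]$. The planar stick index $\mathrm{pl}[K]$ is the smallest number of edges in any planar stick diagram of $[K]$. *)

(* Defs.v *)
From HB Require Import structures.
From mathcomp Require Import all_boot all_order all_algebra.
From mathcomp Require Import all_classical all_reals all_analysis.
Set Implicit Arguments. Unset Strict Implicit. Unset Printing Implicit Defensive.
Import Order.TTheory GRing.Theory Num.Theory.
Import numFieldNormedType.Exports.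
Local Open Scope classical_set_scope.
Local Open Scope ring_scope.

Section Knots.
Variable R : realType.

Definition P2 := (R * R)%type.
Definition P3 := (R * R * R)%type.

Definition lerp2 (a b : P2) (t : R) : P2 :=
  ((1 - t) * a.1 + t * b.1, (1 - t) * a.2 + t * b.2).
Definition lerp3 (a b : P3) (t : R) : P3 :=
  (lerp2 a.1 b.1 t, (1 - t) * a.2 + t * b.2).

Definition vtx2 (q : seq P2) (i : nat) : P2 := nth (0, 0) q (i %% size q).
Definition vtx3 (q : seq P3) (i : nat) : P3 := nth (0, 0, 0) q (i %% size q).

Definition edge2 (q : seq P2) (i : nat) : set P2 :=
  [set p | exists t, 0 <= t <= 1 /\ p = lerp2 (vtx2 q i) (vtx2 q i.+1) t].
Definition edge_interior2 (q : seq P2) (i : nat) : set P2 :=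
  [set p | exists t, 0 < t < 1 /\ p = lerp2 (vtx2 q i) (vtx2 q i.+1) t].
Definition edge3 (q : seq P3) (i : nat) : set P3 :=
  [set p | exists t, 0 <= t <= 1 /\ p = lerp3 (vtx3 q i) (vtx3 q i.+1) t].

Definition follows (n i j : nat) : Prop := j = (i.+1 %% n)%N.
Definition nonadjacent (n i j : nat) : Prop :=
  i <> j /\ ~ follows n i j /\ ~ follows n j i.

Definition PL_knot (K : seq P3) : Prop :=
  let n := size K in
  [/\ (3 <= n)%N,
      (forall i, (i < n)%N -> vtx3 K i <> vtx3 K i.+1),
      (forall i j, (i < n)%N -> (j < n)%N -> follows n i j ->
          edge3 K i `&` edge3 K j = [set vtx3 K j]) &
      (forall i j, (i < n)%N -> (j < n)%N -> nonadjacent n i j ->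
          edge3 K i `&` edge3 K j = set0)].

Definition knot_set (K : seq P3) : set P3 :=
  [set x | exists i, (i < size K)%N /\ edge3 K i x].

Definition ambient_isotopic (A B : set P3) : Prop :=
  exists H : R * P3 -> P3,
    [/\ {within [set p : R * P3 | 0 <= p.1 <= 1], continuous H},
        (forall x, H (0, x) = x),
        (forall t, 0 <= t <= 1 -> exists g : P3 -> P3,
            [/\ continuous g, cancel (fun x => H (t, x)) g &
                cancel g (fun x => H (t, x))]) &
        (fun x => H (1, x)) @` A = B].

Definition planar_stick_polygon (q : seq P2) : Prop :=
  let n := size q in
  [/\ (3 <= n)%N,
      (forall i, (i < n)%N -> vtx2 q i <> vtx2 q i.+1),
      (forall i j, (i < n)%N -> (j < n)%N -> follows n i j ->
          edge2 q i `&` edge2 q j = [set vtx2 q j]),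
      (forall i j, (i < n)%N -> (j < n)%N -> nonadjacent n i j ->
          forall p, edge2 q i p -> edge2 q j p ->
            [/\ edge_interior2 q i p, edge_interior2 q j p &
                forall p', edge2 q i p' -> edge2 q j p' -> p' = p]) &
      (forall i j k, (i < n)%N -> (j < n)%N -> (k < n)%N ->
          i <> j -> j <> k -> i <> k ->
          edge2 q i `&` edge2 q j `&` edge2 q k = set0)].

(* Over/under information is given by a lift: a continuous height function
   h i on each edge i (parameter t in [0,1]), glued at the vertices, such that
   the two strands at each crossing get different heights. *)
Definition stick_lift (q : seq P2) (h : nat -> R -> R) : Prop :=
  let n := size q in
  [/\ (forall i, (i < n)%N -> {within `[0, 1], continuous (h i)}),
      (forall i, (i < n)%N -> h i 1 = h (i.+1 %% n)%N 0) &
      (forall i j, (i < n)%N -> (j < n)%N -> nonadjacent n i j ->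
          forall t u, 0 <= t <= 1 -> 0 <= u <= 1 ->
            lerp2 (vtx2 q i) (vtx2 q i.+1) t = lerp2 (vtx2 q j) (vtx2 q j.+1) u ->
            h i t <> h j u)].

Definition lift_set (q : seq P2) (h : nat -> R -> R) : set P3 :=
  [set x | exists i t, [/\ (i < size q)%N, 0 <= t <= 1 &
       x = (lerp2 (vtx2 q i) (vtx2 q i.+1) t, h i t)]].

Definition stick_diagram_of (K : seq P3) (q : seq P2) (h : nat -> R -> R) : Prop :=
  [/\ planar_stick_polygon q, stick_lift q h &
      ambient_isotopic (lift_set q h) (knot_set K)].

Definition ncrossings (q : seq P2) : nat :=
  #|[set p : 'I_(size q) * 'I_(size q) | (p.1 < p.2)%N &&
     `[< nonadjacent (size q) p.1 p.2 /\ exists x, edge2 q p.1 x /\ edge2 q p.2 x >]]|.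

Definition crossing_number (K : seq P3) : R :=
  inf [set x : R | exists q h, stick_diagram_of K q h /\ x = (ncrossings q)%:R].

Definition planar_stick_index (K : seq P3) : R :=
  inf [set x : R | exists q h, stick_diagram_of K q h /\ x = (size q)%:R].

End Knots.

(* Main.v *)
Require Import Defs.
From HB Require Import structures.
From mathcomp Require Import all_boot all_order all_algebra.
From mathcomp Require Import all_classical all_reals all_analysis.
From mathcomp Require Import ring lra zify.
Import Order.TTheory GRing.Theory Num.Theory.
Import numFieldNormedType.Exports.
Set Implicit Arguments. Unset Strict Implicit. Unset Printing Implicit Defensive.
Local Open Scope ring_scope.

Section Alg.
Variable R : realType.
Implicit Types (p q : P3 R).

Definition mk3 (x y z : R) : P3 R := ((x, y), z).
Definition sub3 p q : P3 R := mk3 (p.1.1 - q.1.1) (p.1.2 - q.1.2) (p.2 - q.2).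

Section Gen.
Variables (T : comRingType) (e : R -> T) (a b : T).
Definition px p : T := e p.1.1 + a * e p.2.
Definition py p : T := e p.1.2 + b * e p.2.
Definition cr p q : T := px p * py q - py p * px q.
Definition Nf E : T := px E ^+ 2 + py E ^+ 2.
Definition Psif D E : T := cr D E.
Definition Phif vi Ei vj Ej vk Ek : T :=
  cr Ej (sub3 vi vj) * cr Ek Ei - cr Ek (sub3 vi vk) * cr Ej Ei.
End Gen.

Section Morph.
Variables (T T' : comRingType) (f : {rmorphism T -> T'}) (e : R -> T) (e' : R -> T').
Hypothesis fe : forall c, f (e c) = e' c.
Lemma px_morph a p : f (px e a p) = px e' (f a) p.
Proof. by rewrite /px rmorphD rmorphM !fe. Qed.
Lemma py_morph b p : f (py e b p) = py e' (f b) p.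
Proof. by rewrite /py rmorphD rmorphM !fe. Qed.
Lemma cr_morph a b p q : f (cr e a b p q) = cr e' (f a) (f b) p q.
Proof. by rewrite /cr rmorphB !rmorphM !px_morph !py_morph. Qed.
Lemma Nf_morph a b E : f (Nf e a b E) = Nf e' (f a) (f b) E.
Proof. by rewrite /Nf rmorphD !rmorphXn px_morph py_morph. Qed.
Lemma Psif_morph a b D E : f (Psif e a b D E) = Psif e' (f a) (f b) D E.
Proof. exact: cr_morph. Qed.
Lemma Phif_morph a b vi Ei vj Ej vk Ek :
  f (Phif e a b vi Ei vj Ej vk Ek) = Phif e' (f a) (f b) vi Ei vj Ej vk Ek.
Proof. by rewrite /Phif rmorphB !rmorphM !cr_morph. Qed.
End Morph.

Definition idR : R -> R := fun c => c.

Lemma key_identity (a b s t u r lam mu : R) (pi Ei Ej Ek : P3 R) :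
  let pj := mk3 (pi.1.1 - a * lam) (pi.1.2 - b * lam) (pi.2 + lam) in
  let pk := mk3 (pi.1.1 - a * mu) (pi.1.2 - b * mu) (pi.2 + mu) in
  let vi := mk3 (pi.1.1 - t * Ei.1.1) (pi.1.2 - t * Ei.1.2) (pi.2 - t * Ei.2) in
  let vj := mk3 (pj.1.1 - u * Ej.1.1) (pj.1.2 - u * Ej.1.2) (pj.2 - u * Ej.2) in
  let vk := mk3 (pk.1.1 - r * Ek.1.1) (pk.1.2 - r * Ek.1.2) (pk.2 - r * Ek.2) in
  Phif idR (a - s * px idR a Ej) (b - s * py idR b Ej) vi Ei vj Ej vk Ek =
  - s * mu * (1 - s * Ej.2) * cr idR a b Ej Ei * cr idR a b Ek Ej.
Proof.
rewrite /Phif /cr /px /py /sub3 /mk3 /idR /=. ring.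
Qed.

Lemma poly_nonroot (p : {poly R}) : p != 0 -> exists a, p.[a] != 0.
Proof.
move=> p0; apply/not_existsP => /= H.
have := max_poly_roots p0 (rs := [seq i%:R | i <- iota 0 (size p)]).
rewrite size_map size_iota ltnn => h; apply: notF; apply: h.
  by apply/allP => x /mapP [i _ ->]; rewrite /root; apply/negPn/negP => h; apply: (H i%:R).
rewrite map_inj_uniq ?iota_uniq // => i j /eqP; rewrite eqr_nat => /eqP.
by [].
Qed.

Definition ev2 (a b : R) : {rmorphism {poly {poly R}} -> R} :=
  horner_eval b \o map_poly (horner_eval a).

Lemma ev2E a b (w : {poly {poly R}}) : ev2 a b w = (map_poly (horner_eval a) w).[b].
Proof. by []. Qed.

Lemma poly2_nonroot (p : {poly {poly R}}) : p != 0 -> exists a b, ev2 a b p != 0.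
Proof.
move=> p0.
have lc0 : lead_coef p != 0 by rewrite lead_coef_eq0.
have [a ha] := @poly_nonroot _ lc0.
have m0 : map_poly (horner_eval a) p != 0.
  apply/negP => /eqP h.
  have := congr1 (fun q : {poly R} => q`_(size p).-1) h.
  rewrite coef_map /= coef0 horner_evalE => h2; move: ha; by rewrite /lead_coef h2 eqxx.
have [b hb] := @poly_nonroot _ m0.
by exists a, b; rewrite ev2E.
Qed.

Lemma avoid_roots (I : finType) (P : I -> {poly {poly R}}) :
  exists a b, forall i, P i != 0 -> ev2 a b (P i) != 0.
Proof.
have Q0 : \prod_(i | P i != 0) P i != 0 by apply/prodf_neq0.
have [a [b hab]] := @poly2_nonroot _ Q0.
exists a, b => i Pi.
move: hab; rewrite rmorph_prod => /prodf_neq0; apply; done.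
Qed.


Definition eP (c : R) : {poly {poly R}} := c%:P%:P.
Definition AP : {poly {poly R}} := ('X)%:P.
Definition BP : {poly {poly R}} := 'X.

Lemma ev2_eP a b c : ev2 a b (eP c) = idR c.
Proof. by rewrite ev2E /eP map_polyC hornerC /= horner_evalE hornerC. Qed.
Lemma ev2_AP a b : ev2 a b AP = a.
Proof. by rewrite ev2E /AP map_polyC hornerC /= horner_evalE hornerX. Qed.
Lemma ev2_BP a b : ev2 a b BP = b.
Proof. by rewrite ev2E /BP map_polyX hornerX. Qed.

Definition dich (F : R -> R -> R) (a b : R) :=
  (forall a' b', F a' b' = 0) \/ F a b != 0.

Lemma choose_dir (n : nat) (v E : nat -> P3 R) : exists a b,
  forall i j k, (i < n)%N -> (j < n)%N -> (k < n)%N ->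
  [/\ dich (fun a b => Nf idR a b (E i)) a b,
      dich (fun a b => Psif idR a b (sub3 (v j) (v k)) (E k)) a b &
      dich (fun a b => Phif idR a b (v i) (E i) (v j) (E j) (v k) (E k)) a b].
Proof.
pose P (x : 'I_3 * ('I_n * 'I_n * 'I_n)) : {poly {poly R}} :=
  let: (c, (i, j, k)) := x in
  if (c : nat) == 0%N then Nf eP AP BP (E i)
  else if (c : nat) == 1%N then Psif eP AP BP (sub3 (v j) (v k)) (E k)
  else Phif eP AP BP (v i) (E i) (v j) (E j) (v k) (E k).
have [a [b hab]] := avoid_roots P.
exists a, b => i j k hi hj hk.
have gen : forall (c : 'I_3) (F : R -> R -> R),
    (forall a' b', ev2 a' b' (P (c, (Ordinal hi, Ordinal hj, Ordinal hk))) = F a' b') ->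
    dich F a b.
  move=> c F hF.
  case: (eqVneq (P (c, (Ordinal hi, Ordinal hj, Ordinal hk))) 0) => h.
    by left=> a' b'; rewrite -hF h rmorph0.
  by right; rewrite -hF; apply: hab.
have m := ev2_eP.
split.
- apply: (gen (@Ordinal 3 0 isT)) => a' b'; rewrite [P _]/=.
  by rewrite (Nf_morph (f := ev2 a' b') (e' := idR) (m a' b')) ev2_AP ev2_BP.
- apply: (gen (@Ordinal 3 1 isT)) => a' b'; rewrite [P _]/=.
  by rewrite (Psif_morph (f := ev2 a' b') (e' := idR) (m a' b')) ev2_AP ev2_BP.
- apply: (gen (@Ordinal 3 2 isT)) => a' b'; rewrite [P _]/=.
  by rewrite (Phif_morph (f := ev2 a' b') (e' := idR) (m a' b')) ev2_AP ev2_BP.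
Qed.

End Alg.

Section Plane.
Variable R : realType.
Implicit Types (P Q X Y : P2 R).

Definition seg P Q : set (P2 R) :=
  [set X | exists t, 0 <= t <= 1 /\ X = lerp2 P Q t].
Definition c2 P P' Q Q' : R :=
  (P'.1 - P.1) * (Q'.2 - Q.2) - (P'.2 - P.2) * (Q'.1 - Q.1).

Lemma pairE (x1 x2 y1 y2 : R) : (x1, x2) = (y1, y2) <-> x1 = y1 /\ x2 = y2.
Proof. by split => [[-> ->]|[-> ->]]. Qed.

Lemma seg_S2 P P' Q Q' X Y : seg P P' X -> seg Q Q' X -> seg P P' Y -> seg Q Q' Y ->
  X <> Y -> c2 P P' Q Q' = 0.
Proof.
case: P P' Q Q' X Y => [p1 p2] [p1' p2'] [q1 q2] [q1' q2'] [x1 x2] [y1 y2].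
move=> [t [_ /pairE [hx1 hx2]]] [u [_ /pairE [hx3 hx4]]].
move=> [t' [_ /pairE [hy1 hy2]]] [u' [_ /pairE [hy3 hy4]]] hxy.
rewrite /c2 /=; simpl in *.
have hu : u != u'.
  apply/eqP => e; apply: hxy; rewrite hx3 hx4 hy3 hy4 e; done.
have e1 : (u - u') * (q1' - q1) = (t - t') * (p1' - p1) by lra.
have e2 : (u - u') * (q2' - q2) = (t - t') * (p2' - p2) by lra.
have : (u - u') * ((p1' - p1) * (q2' - q2) - (p2' - p2) * (q1' - q1)) = 0.
  transitivity ((p1' - p1) * ((u - u') * (q2' - q2)) - (p2' - p2) * ((u - u') * (q1' - q1))); first by ring.
  by rewrite e1 e2; ring.
by move/eqP; rewrite mulf_eq0 subr_eq0 (negbTE hu) => /eqP.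
Qed.

Lemma par_kappa (d1 d2 f1 f2 : R) : (d1 != 0) || (d2 != 0) ->
  d1 * f2 - d2 * f1 = 0 -> exists k, f1 = k * d1 /\ f2 = k * d2.
Proof.
case/orP => hd h.
  exists (f1 / d1); split; first by field.
  apply: (mulfI hd); rewrite mulrA mulrCA divff // mulr1.
  by move/eqP: h; rewrite subr_eq0 => /eqP ->; ring.
exists (f2 / d2); split; last by field.
have : d2 * f1 = d1 * f2 by move/eqP: h; rewrite subr_eq0 eq_sym => /eqP.
move=> e; apply: (mulfI hd); rewrite e; by field.
Qed.

Lemma choose1D (t u k : R) : 0 <= t <= 1 -> 0 <= u <= 1 -> k != 0 ->
  [\/ 0 <= u - t / k <= 1, 0 <= t - u * k <= 1 | 0 <= t + (1 - u) * k <= 1].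
Proof.
move=> /andP [t0 t1] /andP [u0 u1] k0.
have hw : t / k * k = t by field.
move: hw; set w := t / k => hw.
clearbody w.
case: (ltrgtP k 0) => hk; last by move: k0; rewrite hk eqxx.
- case: (lerP 0 (t + (1 - u) * k)) => h.
    by apply: Or33; apply/andP; split => //; nra.
  by apply: Or31; apply/andP; split; nra.
- case: (lerP (u * k) t) => h.
    by apply: Or32; apply/andP; split; nra.
  by apply: Or31; apply/andP; split; nra.
Qed.

Lemma seg_S1 P P' Q Q' X : P <> P' -> Q <> Q' -> c2 P P' Q Q' = 0 ->
  seg P P' X -> seg Q Q' X ->
  [\/ seg Q Q' P, seg P P' Q | seg P P' Q'].
Proof.
case: P P' Q Q' X => [p1 p2] [p1' p2'] [q1 q2] [q1' q2'] [x1 x2].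
move=> hP hQ; rewrite /c2 /= => hc.
move=> [t [ht /pairE [hx1 hx2]]] [u [hu /pairE [hx3 hx4]]].
simpl in *.
have hd : (p1' - p1 != 0) || (p2' - p2 != 0).
  rewrite -negb_and; apply/negP => /andP [h1 h2]; apply: hP.
  by move: h1 h2; rewrite !subr_eq0 => /eqP -> /eqP ->.
have [k [hk1 hk2]] := par_kappa hd hc.
have k0 : k != 0.
  apply/negP => /eqP k0; apply: hQ; move: hk1 hk2; rewrite k0 !mul0r.
  by move/eqP; rewrite subr_eq0 => /eqP -> /eqP; rewrite subr_eq0 => /eqP ->.
have eq1 : q1' = q1 + k * (p1' - p1) by lra.
have eq2 : q2' = q2 + k * (p2' - p2) by lra.
rewrite eq1 eq2 in hx3 hx4 *.
have er1 : q1 = p1 + (t - u * k) * (p1' - p1) by lra.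
have er2 : q2 = p2 + (t - u * k) * (p2' - p2) by lra.
rewrite er1 er2.
case: (choose1D ht hu k0) => hs.
- apply: Or31; exists (u - t / k); split => //.
  by apply/pairE; rewrite /=; split; field.
- apply: Or32; exists (t - u * k); split => //.
  by apply/pairE; rewrite /=; split; ring.
- apply: Or33; exists (t + (1 - u) * k); split => //.
  by apply/pairE; rewrite /=; split; ring.
Qed.

Lemma seg_S3 P P' P'' X : P <> P' -> P' <> P'' ->
  seg P P' X -> seg P' P'' X -> X <> P' -> seg P' P'' P \/ seg P P' P''.
Proof.
move=> hP hP' h1 h2 hX.
have hP'1 : seg P P' P'.
  by exists 1; split; [lra| case: P P' {h1 h2 hX hP hP'} => [??] [??]; apply/pairE; rewrite /=; split; ring].
have hP'2 : seg P' P'' P'.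
  by exists 0; split; [lra| case: P' P'' {h1 h2 hX hP hP' hP'1} => [??] [??]; apply/pairE; rewrite /=; split; ring].
have hc := seg_S2 h1 h2 hP'1 hP'2 hX.
move: hP hP' h1 h2 hX hc {hP'1 hP'2}.
case: P P' P'' X => [p1 p2] [p1' p2'] [p1'' p2''] [x1 x2].
move=> hP hP' [t [ht /pairE [hx1 hx2]]] [u [hu /pairE [hx3 hx4]]] hX; rewrite /c2 /= => hc.
simpl in *.
have hd : (p1' - p1 != 0) || (p2' - p2 != 0).
  rewrite -negb_and; apply/negP => /andP [h1 h2]; apply: hP.
  by move: h1 h2; rewrite !subr_eq0 => /eqP -> /eqP ->.
have [k [hk1 hk2]] := par_kappa hd hc.
have eq1 : p1'' = p1' + k * (p1' - p1) by lra.
have eq2 : p2'' = p2' + k * (p2' - p2) by lra.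
rewrite eq1 eq2 in hx3 hx4 *.
have e1 : (t - 1 - u * k) * (p1' - p1) = 0 by lra.
have e2 : (t - 1 - u * k) * (p2' - p2) = 0 by lra.
have etk : t - 1 - u * k = 0.
  case/orP: hd => hd.
    by move/eqP: e1; rewrite mulf_eq0 (negbTE hd) orbF => /eqP.
  by move/eqP: e2; rewrite mulf_eq0 (negbTE hd) orbF => /eqP.
have u0 : u != 0.
  apply/eqP => u0; apply: hX; rewrite hx3 hx4 u0; apply/pairE; split; ring.
move: ht hu => /andP [t0 t1] /andP [u0' u1].
have upos : 0 < u by rewrite lt_neqAle eq_sym u0 u0'.
case: (lerP 0 (1 + k)) => hk.
- right; exists (1 + k); split.
    have uk : u * k <= 0 by lra.
    have : k <= 0 by rewrite -(pmulr_rle0 _ upos).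
    by move=> kk; apply/andP; split => //; lra.
  by apply/pairE; rewrite /=; split; ring.
- left; exists (- k^-1); split.
    have kneg : k < 0 by lra.
    have k0 : k != 0 by apply/eqP => k0; move: hk; rewrite k0; lra.
    have hw : k^-1 * k = 1 by rewrite mulVf.
    move: hw; set w := k^-1 => hw; clearbody w.
    apply/andP; split; nra.
  have k0 : k != 0 by apply/eqP => k0; move: hk; rewrite k0; lra.
  by apply/pairE; rewrite /=; split; field.
Qed.
End Plane.

Section Mods.
Local Open Scope nat_scope.
Lemma modS_or i n : i < n -> (i.+1 < n /\ i.+1 %% n = i.+1) \/ (i.+1 = n /\ i.+1 %% n = 0).
Proof.
move=> hi; case: (ltnP i.+1 n) => h.
  by left; rewrite modn_small.
have e : i.+1 = n by apply/eqP; rewrite eqn_leq hi h.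
by right; rewrite e modnn.
Qed.
Lemma modSS i n : ((i.+1 %% n).+1 %% n) = i.+2 %% n.
Proof. by rewrite -addn1 modnDml addn1. Qed.
Lemma m1 (n i : nat) : 3 <= n -> i < n -> i <> (i.+1 %% n).
Proof. move=> h hi; case: (modS_or hi) => [[? ->]|[? ->]]; lia. Qed.
Lemma m3 (n i j : nat) : i < n -> j < n -> i.+1 %% n = j.+1 %% n -> i = j.
Proof. move=> hi hj; case: (modS_or hi) => [[? ->]|[? ->]]; case: (modS_or hj) => [[? ->]|[? ->]]; lia. Qed.
Lemma m2 (n i : nat) : 3 <= n -> i < n -> i <> ((i.+1 %% n).+1 %% n).
Proof.
move=> h hi; case: (modS_or hi) => [[h1 e]|[h1 e]]; rewrite e.
  case: (modS_or h1) => [[? ->]|[? ->]]; lia.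
rewrite modn_small; lia.
Qed.

End Mods.

Section Cont.
Variable R : realType.
Lemma cont_pair (T U V : topologicalType) (f : T -> U) (g : T -> V) :
  continuous f -> continuous g -> continuous (fun x => (f x, g x)).
Proof. move=> cf cg x; apply: cvg_pair; [exact: cf| exact: cg]. Qed.
Lemma cont_fst (U V : topologicalType) : continuous (@fst U V).
Proof. move=> x; exact: cvg_fst. Qed.
Lemma cont_snd (U V : topologicalType) : continuous (@snd U V).
Proof. move=> x; exact: cvg_snd. Qed.
Lemma cont_comp (T U V : topologicalType) (f : T -> U) (g : U -> V) :
  continuous f -> continuous g -> continuous (g \o f).
Proof. move=> cf cg x; exact: (continuous_comp (cf x) (cg (f x))). Qed.
Lemma cont_mul (T : topologicalType) (f g : T -> R) :
  continuous f -> continuous g -> continuous (fun x => f x * g x).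
Proof. move=> cf cg x; exact: (@continuousM R T f g x (cf x) (cg x)). Qed.
Lemma cont_sub (T : topologicalType) (f g : T -> R) :
  continuous f -> continuous g -> continuous (fun x => f x - g x).
Proof. move=> cf cg x; exact: (@continuousB R R^o T f g x (cf x) (cg x)). Qed.
Lemma cont_add (T : topologicalType) (f g : T -> R) :
  continuous f -> continuous g -> continuous (fun x => f x + g x).
Proof. move=> cf cg x; exact: (@continuousD R R^o T f g x (cf x) (cg x)). Qed.
End Cont.

Arguments idR {R}.

Section Aux.
Variable R : realType.

Lemma key2 (a b s t u r lam mu : R) (pi Ei Ej Ek vi vj vk : P3 R) :
  vi = mk3 (pi.1.1 - t * Ei.1.1) (pi.1.2 - t * Ei.1.2) (pi.2 - t * Ei.2) ->
  vj = mk3 (pi.1.1 - a * lam - u * Ej.1.1) (pi.1.2 - b * lam - u * Ej.1.2) (pi.2 + lam - u * Ej.2) ->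
  vk = mk3 (pi.1.1 - a * mu - r * Ek.1.1) (pi.1.2 - b * mu - r * Ek.1.2) (pi.2 + mu - r * Ek.2) ->
  Phif idR (a - s * px idR a Ej) (b - s * py idR b Ej) vi Ei vj Ej vk Ek =
  - s * mu * (1 - s * Ej.2) * cr idR a b Ej Ei * cr idR a b Ek Ej.
Proof.
move=> -> -> ->; rewrite /Phif /cr /px /py /sub3 /mk3 /idR /=; ring.
Qed.

Lemma cross_lemma (a b Dx Dy Dz Ex Ey Ez t : R) :
  Dz * Ey - Dy * Ez = 0 -> Dx * Ez - Dz * Ex = 0 ->
  (Dx - t * Ex) + a * (Dz - t * Ez) = 0 -> (Dy - t * Ey) + b * (Dz - t * Ez) = 0 ->
  (Ex + a * Ez != 0) \/ (Ey + b * Ez != 0) ->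
  [/\ Dx = t * Ex, Dy = t * Ey & Dz = t * Ez].
Proof.
move=> c1 c2 e1 e2 hE.
have h1 : (Dz - t * Ez) * (Ex + a * Ez) = 0.
  transitivity (- (Dx * Ez - Dz * Ex) + Ez * ((Dx - t * Ex) + a * (Dz - t * Ez))); first by ring.
  by rewrite c2 e1; ring.
have h2 : (Dz - t * Ez) * (Ey + b * Ez) = 0.
  transitivity ((Dz * Ey - Dy * Ez) + Ez * ((Dy - t * Ey) + b * (Dz - t * Ez))); first by ring.
  by rewrite c1 e2; ring.
have hz : Dz - t * Ez = 0.
  case: hE => hE.
    by move/eqP: h1; rewrite mulf_eq0 (negbTE hE) orbF => /eqP.
  by move/eqP: h2; rewrite mulf_eq0 (negbTE hE) orbF => /eqP.
rewrite hz mulr0 addr0 in e1 e2.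
split; lra.
Qed.

Lemma mk3E (p : P3 R) : p = mk3 p.1.1 p.1.2 p.2.
Proof. by case: p => [[]]. Qed.

Lemma lerp3_0 (p p' : P3 R) : lerp3 p p' 0 = p.
Proof. by rewrite [RHS]mk3E /lerp3 /lerp2 /mk3 /=; congr ((_, _), _); ring. Qed.
Lemma lerp2_0 (p p' : P2 R) : lerp2 p p' 0 = p.
Proof. by case: p => ??; rewrite /lerp2 /=; congr (_, _); ring. Qed.
Lemma lerp2_1 (p p' : P2 R) : lerp2 p p' 1 = p'.
Proof. by case: p' => ??; rewrite /lerp2 /=; congr (_, _); ring. Qed.

End Aux.

Section Diagram.
Local Open Scope classical_set_scope.
Variable R : realType.
Variable K : seq (P3 R).
Hypothesis HK : PL_knot K.
Variables a b : R.

Local Notation n := (size K).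
Local Notation v i := (vtx3 K i).
Local Notation E i := (sub3 (vtx3 K i.+1) (vtx3 K i)).

Definition pr (p : P3 R) : P2 R := (px idR a p, py idR b p).
Definition qd := map pr K.
Definition hd (i : nat) (t : R) : R := (1 - t) * (v i).2 + t * (v i.+1).2.

Lemma n3 : (3 <= n)%N. Proof. by case: HK. Qed.
Lemma n_gt0 : (0 < n)%N. Proof. by have := n3; case: n. Qed.

Lemma vmod i : vtx3 K (i %% n) = v i.
Proof. by rewrite /vtx3 modn_mod. Qed.
Lemma vmodS i : vtx3 K (i %% n).+1 = v i.+1.
Proof. by rewrite /vtx3 -addn1 modnDml addn1. Qed.

Lemma size_qd : size qd = n. Proof. exact: size_map. Qed.
Lemma vtx2E i : vtx2 qd i = pr (v i).
Proof. by rewrite /vtx2 size_qd (nth_map (0, 0, 0)) // ltn_pmod // n_gt0. Qed.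
Lemma edge2E i : edge2 qd i = seg (pr (v i)) (pr (v i.+1)).
Proof. by rewrite /edge2 /seg !vtx2E. Qed.

Lemma pr_lerp p p' t : pr (lerp3 p p' t) = lerp2 (pr p) (pr p') t.
Proof. by rewrite /pr /lerp3 /lerp2 /px /py /idR /=; congr (_, _); ring. Qed.

Lemma pr_inj p p' : pr p = pr p' -> p.2 = p'.2 -> p = p'.
Proof.
rewrite /pr /px /py /idR => /pairE [h1 h2] h3.
rewrite h3 in h1 h2; rewrite (mk3E p) (mk3E p'); congr mk3; lra.
Qed.

Lemma Kdist i : (i < n)%N -> v i <> v i.+1.
Proof. by case: HK => _ h _ _; apply: h. Qed.

Lemma Kfollow i j : (i < n)%N -> (j < n)%N -> follows n i j ->
  edge3 K i `&` edge3 K j = [set v j].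
Proof. by case: HK => _ _ h _; apply: h. Qed.

Lemma Knonadj i j : (i < n)%N -> (j < n)%N -> nonadjacent n i j ->
  edge3 K i `&` edge3 K j = set0.
Proof. by case: HK => _ _ _ h; apply: h. Qed.

Lemma v_in_edge i : edge3 K i (v i).
Proof. by exists 0; split; [lra | rewrite lerp3_0]. Qed.

Lemma lerp_in_edge i t : 0 <= t <= 1 -> edge3 K i (lerp3 (v i) (v i.+1) t).
Proof. by move=> ht; exists t. Qed.

Lemma Knot_on j k : (j < n)%N -> (k < n)%N -> j <> k -> j <> (k.+1 %% n)%N ->
  ~ edge3 K k (v j).
Proof.
move=> hj hk hjk hjk1 hin.
case: (pselect (follows n j k)) => hf.
  have /seteqP [sub _] := Kfollow hj hk hf.
  have hvj : (edge3 K j `&` edge3 K k) (v j) by split => //; exact: v_in_edge.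
  have /= e := sub _ hvj.
  by apply: (Kdist hj); rewrite e hf vmod.
have hna : nonadjacent n k j.
  by split; [move=> e; apply: hjk | split].
have /seteqP [sub _] := Knonadj hk hj hna.
by apply: (sub (v j)); split => //; exact: v_in_edge.
Qed.


Hypothesis HN : forall i, (i < n)%N -> dich (fun a b => Nf idR a b (E i)) a b.
Hypothesis HPsi : forall j k, (j < n)%N -> (k < n)%N ->
  dich (fun a b => Psif idR a b (sub3 (v j) (v k)) (E k)) a b.
Hypothesis HPhi : forall i j k, (i < n)%N -> (j < n)%N -> (k < n)%N ->
  dich (fun a b => Phif idR a b (v i) (E i) (v j) (E j) (v k) (E k)) a b.

Lemma px_sub (a' : R) p p' : px idR a' (sub3 p p') = px idR a' p - px idR a' p'.
Proof. rewrite /px /sub3 /idR /=; ring. Qed.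
Lemma py_sub (b' : R) p p' : py idR b' (sub3 p p') = py idR b' p - py idR b' p'.
Proof. rewrite /py /sub3 /idR /=; ring. Qed.

Lemma G0 i : (i < n)%N -> pr (v i) <> pr (v i.+1).
Proof.
move=> hi he.
move: he; rewrite /pr => /pairE [e1 e2].
case: (HN hi) => [H|H].
  have h1 := H 0 0; have h2 := H 1 0.
  move: h1 h2; rewrite /Nf /px /py /sub3 /idR /= !mul0r !addr0 !mul1r.
  set x := _ - _; set y := _ - _; set z := _ - _ => h1 h2.
  have sx := sqr_ge0 x; have sy := sqr_ge0 y; have sxz := sqr_ge0 (x + z).
  have hx : x ^+ 2 = 0 by lra.
  have hy : y ^+ 2 = 0 by lra.
  have hxz : (x + z) ^+ 2 = 0 by lra.
  move/eqP: hx; rewrite sqrf_eq0 => /eqP hx.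
  move/eqP: hy; rewrite sqrf_eq0 => /eqP hy.
  move/eqP: hxz; rewrite hx add0r sqrf_eq0 => /eqP hz.
  move: hx hy hz; rewrite /x /y /z => hx hy hz.
  apply: (Kdist hi); rewrite (mk3E (v i)) (mk3E (v i.+1)); congr mk3; lra.
move: H; rewrite /Nf px_sub py_sub e1 e2 !subrr expr0n /= addr0 eqxx.
by [].
Qed.

Lemma G0' i : (i < n)%N -> (px idR a (E i) != 0) \/ (py idR b (E i) != 0).
Proof.
move=> hi; case: (eqVneq (px idR a (E i)) 0) => h1; last by left.
case: (eqVneq (py idR b (E i)) 0) => h2; last by right.
exfalso; apply: (G0 hi); rewrite /pr; apply/pairE; move: h1 h2.
rewrite px_sub py_sub => /eqP; rewrite subr_eq0 => /eqP h1 /eqP; rewrite subr_eq0 => /eqP h2.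
by split.
Qed.

Lemma G j k : (j < n)%N -> (k < n)%N -> j <> k -> j <> (k.+1 %% n)%N ->
  ~ seg (pr (v k)) (pr (v k.+1)) (pr (v j)).
Proof.
move=> hj hk hjk hjk1 [t [ht he]].
move: he; rewrite /lerp2 /pr => /pairE [e1 e2].
case: (HPsi hj hk) => [H|H].
  have h1 := H 0 0; have h2 := H 1 0; have h3 := H 0 1.
  move: h1 h2 h3; rewrite /Psif /cr /px /py /sub3 /idR /= !mul0r !addr0 !mul1r.
  move=> h1 h2 h3.
  have c1 : ((v j).2 - (v k).2) * ((v k.+1).1.2 - (v k).1.2) - ((v j).1.2 - (v k).1.2) * ((v k.+1).2 - (v k).2) = 0 by lra.
  have c2 : ((v j).1.1 - (v k).1.1) * ((v k.+1).2 - (v k).2) - ((v j).2 - (v k).2) * ((v k.+1).1.1 - (v k).1.1) = 0 by lra.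
  have hE := G0' hk.
  move: hE; rewrite /px /py /sub3 /idR /= => hE.
  move: e1 e2; rewrite /px /py /idR /= => e1 e2.
  have l1 : (((v j).1.1 - (v k).1.1) - t * ((v k.+1).1.1 - (v k).1.1)) + a * (((v j).2 - (v k).2) - t * ((v k.+1).2 - (v k).2)) = 0 by lra.
  have l2 : (((v j).1.2 - (v k).1.2) - t * ((v k.+1).1.2 - (v k).1.2)) + b * (((v j).2 - (v k).2) - t * ((v k.+1).2 - (v k).2)) = 0 by lra.
  have [ex ey ez] := cross_lemma c1 c2 l1 l2 hE.
  apply: (Knot_on hj hk hjk hjk1); exists t; split => //.
  rewrite (mk3E (v j)) /lerp3 /lerp2 /mk3 /=; congr ((_, _), _); lra.
move: H; rewrite /Psif /cr (px_sub _ (v j)) (py_sub _ (v j)).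
have -> : px idR a (v j) - px idR a (v k) = t * px idR a (E k).
  rewrite px_sub; move: e1; rewrite /px /idR /= => e1; lra.
have -> : py idR b (v j) - py idR b (v k) = t * py idR b (E k).
  rewrite py_sub; move: e2; rewrite /py /idR /= => e2; lra.
set X := px idR a (E k); set Y := py idR b (E k).
have -> : t * X * Y - t * Y * X = 0 by ring.
by rewrite eqxx.
Qed.


Lemma G0m i : (i < n)%N -> pr (v i.+1) <> pr (v i.+2).
Proof.
move=> hi; have hk : (i.+1 %% n < n)%N by rewrite ltn_pmod // n_gt0.
by have := G0 hk; rewrite vmod vmodS.
Qed.

Lemma seg_lerp i t : 0 <= t <= 1 -> seg (pr (v i)) (pr (v i.+1)) (pr (lerp3 (v i) (v i.+1) t)).
Proof. by move=> ht; exists t; rewrite pr_lerp. Qed.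

Lemma seg_inv i X : seg (pr (v i)) (pr (v i.+1)) X ->
  exists t, 0 <= t <= 1 /\ X = pr (lerp3 (v i) (v i.+1) t).
Proof. by move=> [t [ht ->]]; exists t; rewrite pr_lerp. Qed.

Lemma modS_lt i : (i.+1 %% n < n)%N.
Proof. by rewrite ltn_pmod // n_gt0. Qed.

Lemma nonpar i j X : (i < n)%N -> (j < n)%N -> nonadjacent n i j ->
  seg (pr (v i)) (pr (v i.+1)) X -> seg (pr (v j)) (pr (v j.+1)) X ->
  c2 (pr (v i)) (pr (v i.+1)) (pr (v j)) (pr (v j.+1)) <> 0.
Proof.
move=> hi hj [hij [hf1 hf2]] hXi hXj hc.
case: (seg_S1 (G0 hi) (G0 hj) hc hXi hXj) => h.
- by apply: (G hi hj hij hf2).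
- by apply: (G hj hi (fun e => hij (esym e)) hf1).
- move: h; rewrite -(vmod j.+1); apply: (G (modS_lt j) hi).
    by move=> e; apply: hf2.
  by move=> e; apply: hij; apply: (m3 hi hj); rewrite e.
Qed.

Lemma adj_meet i : (i < n)%N ->
  seg (pr (v i)) (pr (v i.+1)) `&` seg (pr (v i.+1)) (pr (v i.+2)) = [set pr (v i.+1)].
Proof.
move=> hi; apply/seteqP; split => X /=.
  move=> [h1 h2]; apply: contrapT => hX.
  case: (seg_S3 (G0 hi) (G0m hi) h1 h2 hX).
  - have := G hi (modS_lt i) (m1 n3 hi) (m2 n3 hi).
    by rewrite vmod vmodS.
  - rewrite -(vmod i.+2) -modSS.
    have hk : ((i.+1 %% n).+1 %% n < n)%N by apply: modS_lt.
    apply: (G hk hi).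
      by move=> e; apply: (m2 n3 hi); rewrite e.
    by move=> e; apply: (m1 n3 (modS_lt i)); rewrite e.
move=> ->; split.
  by exists 1; split; [lra | rewrite lerp2_1].
by exists 0; split; [lra | rewrite lerp2_0].
Qed.

Lemma PS3 i j : (i < n)%N -> (j < n)%N -> follows n i j ->
  edge2 qd i `&` edge2 qd j = [set vtx2 qd j].
Proof.
move=> hi hj ->; rewrite !edge2E vtx2E vmod vmodS; exact: adj_meet.
Qed.

Lemma interior1 i j X : (i < n)%N -> (j < n)%N -> nonadjacent n i j ->
  seg (pr (v i)) (pr (v i.+1)) X -> seg (pr (v j)) (pr (v j.+1)) X ->
  exists t, 0 < t < 1 /\ X = lerp2 (pr (v i)) (pr (v i.+1)) t.
Proof.
move=> hi hj [hij [hf1 hf2]] [t [ht eX]] hXj.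
exists t; split => //.
move: ht => /andP [t0 t1].
have tn0 : t != 0.
  apply/eqP => e; apply: (G hi hj hij hf2); rewrite -[pr (v i)](lerp2_0 _ (pr (v i.+1))) -e -eX //.
have tn1 : t != 1.
  apply/eqP => e; move: hXj; rewrite eX e lerp2_1 -(vmod i.+1); apply: (G (modS_lt i) hj).
    by move=> e'; apply: hf1.
  by move=> e'; apply: hij; apply: (m3 hi hj).
by apply/andP; split; rewrite lt_neqAle ?t0 ?t1 // ?andbT // eq_sym.
Qed.

Lemma nonadj_sym' i j : nonadjacent n i j -> nonadjacent n j i.
Proof. by case=> [h1 [h2 h3]]; split => //; move=> e; apply: h1. Qed.

Lemma PS4 i j : (i < n)%N -> (j < n)%N -> nonadjacent n i j ->
  forall p, edge2 qd i p -> edge2 qd j p ->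
    [/\ edge_interior2 qd i p, edge_interior2 qd j p &
        forall p', edge2 qd i p' -> edge2 qd j p' -> p' = p].
Proof.
move=> hi hj hna p; rewrite !edge2E => hpi hpj.
split.
- by rewrite /edge_interior2 !vtx2E; apply: (interior1 hi hj hna).
- by rewrite /edge_interior2 !vtx2E; apply: (interior1 hj hi (nonadj_sym' hna)).
move=> p' hpi' hpj'; apply: contrapT => hne.
exact: (nonpar hi hj hna hpi hpj (seg_S2 hpi hpj hpi' hpj' (fun e => hne (esym e)))).
Qed.


Lemma adj_triple x y z X : (x < n)%N -> (y < n)%N -> (z < n)%N -> follows n x y ->
  z <> x -> z <> y ->
  seg (pr (v x)) (pr (v x.+1)) X -> seg (pr (v y)) (pr (v y.+1)) X ->
  seg (pr (v z)) (pr (v z.+1)) X -> False.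
Proof.
move=> hx hy hz hf hzx hzy h1 h2 h3.
have eX : X = pr (v y).
  have /seteqP [sub _] := adj_meet hx.
  have := sub X; rewrite /= hf vmod; apply; split => //.
  by move: h2; rewrite hf vmod vmodS.
move: h3; rewrite eX; apply: (G hy hz (fun e => hzy (esym e))).
move=> e; apply: hzx; apply: (m3 hz hx); rewrite -e hf //.
Qed.

Lemma cr_c2 i j : cr idR a b (E i) (E j) = c2 (pr (v i)) (pr (v i.+1)) (pr (v j)) (pr (v j.+1)).
Proof. by rewrite /cr /c2 /pr !px_sub !py_sub. Qed.

Lemma triple_nonadj i j k X : (i < n)%N -> (j < n)%N -> (k < n)%N ->
  nonadjacent n i j -> nonadjacent n i k -> nonadjacent n j k ->
  seg (pr (v i)) (pr (v i.+1)) X -> seg (pr (v j)) (pr (v j.+1)) X ->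
  seg (pr (v k)) (pr (v k.+1)) X -> False.
Proof.
move=> hi hj hk hij hik hjk hXi hXj hXk.
have C0 : cr idR a b (E j) (E i) != 0.
  by apply/eqP; rewrite cr_c2; apply: (nonpar hj hi (nonadj_sym' hij) hXj hXi).
have B0 : cr idR a b (E k) (E j) != 0.
  by apply/eqP; rewrite cr_c2; apply: (nonpar hk hj (nonadj_sym' hjk) hXk hXj).
have [t [ht eXi]] := seg_inv hXi.
have [u [hu eXj]] := seg_inv hXj.
have [r [hr eXk]] := seg_inv hXk.
have mu0 : (lerp3 (v k) (v k.+1) r).2 - (lerp3 (v i) (v i.+1) t).2 != 0.
  apply/negP; rewrite subr_eq0 => /eqP e.
  have ep := pr_inj (etrans (esym eXk) eXi) e.
  have /seteqP [sub _] := Knonadj hi hk hik.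
  apply: (sub (lerp3 (v i) (v i.+1) t)); split; first exact: lerp_in_edge.
  by rewrite -ep; exact: lerp_in_edge.
move: eXj eXk; rewrite eXi /pr /px /py /idR => /pairE [ej1 ej2] /pairE [ek1 ek2].
simpl in ej1, ej2, ek1, ek2.
have key := fun s => @key2 R a b s t u r ((lerp3 (v j) (v j.+1) u).2 - (lerp3 (v i) (v i.+1) t).2)
  ((lerp3 (v k) (v k.+1) r).2 - (lerp3 (v i) (v i.+1) t).2)
  (lerp3 (v i) (v i.+1) t) (E i) (E j) (E k) (v i) (v j) (v k).
have Hvi : v i = mk3 ((lerp3 (v i) (v i.+1) t).1.1 - t * (E i).1.1)
   ((lerp3 (v i) (v i.+1) t).1.2 - t * (E i).1.2) ((lerp3 (v i) (v i.+1) t).2 - t * (E i).2).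
  by rewrite [LHS]mk3E /=; congr mk3; ring.
have Hvj : v j = mk3 ((lerp3 (v i) (v i.+1) t).1.1 - a * ((lerp3 (v j) (v j.+1) u).2 - (lerp3 (v i) (v i.+1) t).2) - u * (E j).1.1)
   ((lerp3 (v i) (v i.+1) t).1.2 - b * ((lerp3 (v j) (v j.+1) u).2 - (lerp3 (v i) (v i.+1) t).2) - u * (E j).1.2)
   ((lerp3 (v i) (v i.+1) t).2 + ((lerp3 (v j) (v j.+1) u).2 - (lerp3 (v i) (v i.+1) t).2) - u * (E j).2).
  by rewrite [LHS]mk3E /=; congr mk3; lra.
have Hvk : v k = mk3 ((lerp3 (v i) (v i.+1) t).1.1 - a * ((lerp3 (v k) (v k.+1) r).2 - (lerp3 (v i) (v i.+1) t).2) - r * (E k).1.1)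
   ((lerp3 (v i) (v i.+1) t).1.2 - b * ((lerp3 (v k) (v k.+1) r).2 - (lerp3 (v i) (v i.+1) t).2) - r * (E k).1.2)
   ((lerp3 (v i) (v i.+1) t).2 + ((lerp3 (v k) (v k.+1) r).2 - (lerp3 (v i) (v i.+1) t).2) - r * (E k).2).
  by rewrite [LHS]mk3E /=; congr mk3; lra.
case: (HPhi hi hj hk) => [H|H].
- pose s : R := if (E j).2 == 1 then -1 else 1.
  have s0 : s != 0 by rewrite /s; case: ifP => _; rewrite ?oppr_eq0 oner_eq0.
  have s1 : 1 - s * (E j).2 != 0.
    rewrite /s; case: (eqVneq (E j).2 1) => [e|e].
      by rewrite e; apply/eqP; lra.
    by rewrite mul1r subr_eq0 eq_sym.
  have := key s Hvi Hvj Hvk.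
  rewrite H => /esym /eqP.
  rewrite !mulf_eq0 oppr_eq0 (negbTE s0) (negbTE mu0) (negbTE s1) (negbTE C0) (negbTE B0).
  by [].
- have := key 0 Hvi Hvj Hvk.
  rewrite !mul0r !subr0 oppr0 !mul0r => e.
  by move: H; rewrite e eqxx.
Qed.

Lemma PS5 i j k : (i < n)%N -> (j < n)%N -> (k < n)%N -> i <> j -> j <> k -> i <> k ->
  edge2 qd i `&` edge2 qd j `&` edge2 qd k = set0.
Proof.
move=> hi hj hk hij hjk hik; apply/seteqP; split => // X; rewrite /= !edge2E.
move=> [[hXi hXj] hXk].
case: (pselect (follows n i j)) => fij.
  exact: (adj_triple hi hj hk fij (fun e => hik (esym e)) (fun e => hjk (esym e)) hXi hXj hXk).
case: (pselect (follows n j i)) => fji.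
  exact: (adj_triple hj hi hk fji (fun e => hjk (esym e)) (fun e => hik (esym e)) hXj hXi hXk).
case: (pselect (follows n i k)) => fik.
  exact: (adj_triple hi hk hj fik (fun e => hij (esym e)) hjk hXi hXk hXj).
case: (pselect (follows n k i)) => fki.
  exact: (adj_triple hk hi hj fki hjk (fun e => hij (esym e)) hXk hXi hXj).
case: (pselect (follows n j k)) => fjk.
  exact: (adj_triple hj hk hi fjk hij hik hXj hXk hXi).
case: (pselect (follows n k j)) => fkj.
  exact: (adj_triple hk hj hi fkj hik hij hXk hXj hXi).
by apply: (triple_nonadj hi hj hk _ _ _ hXi hXj hXk).
Qed.


Lemma PSP : planar_stick_polygon qd.
Proof.
rewrite /planar_stick_polygon /= size_qd; split.
- exact: n3.
- by move=> i hi; rewrite !vtx2E; exact: G0.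
- exact: PS3.
- exact: PS4.
- exact: PS5.
Qed.

Lemma cont_idR : continuous (fun t : R => t).
Proof. by move=> x; exact: cvg_id. Qed.

Lemma lift_ok : stick_lift qd hd.
Proof.
rewrite /stick_lift /= size_qd; split.
- move=> i _; apply: continuous_subspaceT; rewrite /hd.
  apply: cont_add; apply: cont_mul; try exact: cst_continuous; try exact: cont_idR.
  by apply: cont_sub; [exact: cst_continuous | exact: cont_idR].
- by move=> i hi; rewrite /hd vmod vmodS; ring.
- move=> i j hi hj hna t u ht hu; rewrite !vtx2E -!pr_lerp => he hh.
  have ep := pr_inj he hh.
  have /seteqP [sub _] := Knonadj hi hj hna.
  apply: (sub (lerp3 (v i) (v i.+1) t)); split; first exact: lerp_in_edge.
  by rewrite ep; exact: lerp_in_edge.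
Qed.

Definition Hiso (p : R * P3 R) : P3 R :=
  mk3 (p.2.1.1 - p.1 * a * p.2.2) (p.2.1.2 - p.1 * b * p.2.2) p.2.2.

Lemma Hiso1 p : Hiso (1, (pr p, p.2)) = p.
Proof. by rewrite [RHS]mk3E /Hiso /pr /px /py /idR /=; congr mk3; ring. Qed.

Lemma iso : ambient_isotopic (lift_set qd hd) (knot_set K).
Proof.
have cx : continuous (fun p : P3 R => p.1.1).
  exact: (cont_comp (@cont_fst _ _) (@cont_fst _ _)).
have cy : continuous (fun p : P3 R => p.1.2).
  exact: (cont_comp (@cont_fst _ _) (@cont_snd _ _)).
have cz : continuous (fun p : P3 R => p.2) by exact: cont_snd.
exists Hiso; split.
- apply: continuous_subspaceT; rewrite /Hiso /mk3.
  have c1 : continuous (fun p : R * P3 R => p.1) by exact: cont_fst.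
  have c2 : continuous (fun p : R * P3 R => p.2) by exact: cont_snd.
  have cx' : continuous (fun p : R * P3 R => p.2.1.1) by exact: (cont_comp c2 cx).
  have cy' : continuous (fun p : R * P3 R => p.2.1.2) by exact: (cont_comp c2 cy).
  have cz' : continuous (fun p : R * P3 R => p.2.2) by exact: (cont_comp c2 cz).
  apply: cont_pair; [apply: cont_pair|] => //; apply: cont_sub => //;
    apply: cont_mul => //; apply: cont_mul => //; exact: cst_continuous.
- by move=> x; rewrite [RHS]mk3E /Hiso /=; congr mk3; ring.
- move=> t _; exists (fun x => mk3 (x.1.1 + t * a * x.2) (x.1.2 + t * b * x.2) x.2); split.
  + rewrite /mk3; apply: cont_pair; [apply: cont_pair|] => //; apply: cont_add => //;
      apply: cont_mul => //; exact: cst_continuous.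
  + by move=> x; rewrite [RHS]mk3E /Hiso /mk3 /=; congr ((_, _), _); ring.
  + by move=> x; rewrite [RHS]mk3E /Hiso /mk3 /=; congr ((_, _), _); ring.
- apply/seteqP; split.
  + move=> y [x [i [t [hi ht ->]]] <-].
    exists i; split; first by rewrite -size_qd.
    exists t; split => //.
    rewrite !vtx2E -pr_lerp.
    have -> : hd i t = (lerp3 (v i) (v i.+1) t).2 by [].
    by rewrite Hiso1.
  + move=> y [i [hi [t [ht ->]]]].
    exists (pr (lerp3 (v i) (v i.+1) t), (lerp3 (v i) (v i.+1) t).2); last exact: Hiso1.
    exists i, t; split => //; first by rewrite size_qd.
    by rewrite !vtx2E pr_lerp.
Qed.

Lemma diag : stick_diagram_of K qd hd.
Proof. by split; [exact: PSP | exact: lift_ok | exact: iso]. Qed.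

End Diagram.

Section Count.
Local Open Scope nat_scope.

Lemma nonadj_sym n i j : nonadjacent n i j -> nonadjacent n j i.
Proof. by case=> [h1 [h2 h3]]; split => //; move=> e; apply: h1. Qed.

Lemma modP1 n i : i < n -> ((i + n).-1 %% n).+1 %% n = i.
Proof.
move=> hi; rewrite -addn1 modnDml addn1 prednK; last by lia.
by rewrite modnDr modn_small.
Qed.

Lemma modP1_val n i : i < n -> (i + n).-1 %% n = if i == 0 then n.-1 else i.-1.
Proof.
move=> hi; case: eqP => [->|h].
  by rewrite add0n modn_small //; lia.
have -> : (i + n).-1 = i.-1 + n by lia.
by rewrite modnDr modn_small //; lia.
Qed.

Lemma count_row n (i : 'I_n) : 3 <= n ->
  #|[set j : 'I_n | `[< nonadjacent n i j >]]| <= n - 3.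
Proof.
move=> n3.
have n0 : 0 < n by lia.
pose o1 := Ordinal (ltn_pmod i.+1 n0).
pose o2 := Ordinal (ltn_pmod (i + n).-1 n0).
set X := i |: (o1 |: [set o2]).
have hX : #|X| = 3.
  rewrite /X !cardsU1 cards1.
  have h1 : (i : nat) <> i.+1 %% n by apply: m1.
  have h2 : (i : nat) <> (i + n).-1 %% n.
    rewrite modP1_val //; case: eqP => [e|e]; lia.
  have h3 : i.+1 %% n <> (i + n).-1 %% n.
    rewrite modP1_val //; case: (modS_or (ltn_ord i)) => [[? ->]|[? ->]]; case: eqP => [e|e]; lia.
  rewrite !inE.
  have -> : (i == o1) = false by apply/eqP => /(congr1 val) /=.
  have -> : (i == o2) = false by apply/eqP => /(congr1 val) /=.
  have -> : (o1 == o2) = false by apply/eqP => /(congr1 val) /=.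
  by [].
have sub : [set j : 'I_n | `[< nonadjacent n i j >]] \subset ~: X.
  apply/fintype.subsetP => j; rewrite inE => /asboolP [hij [hf1 hf2]]; rewrite !inE.
  rewrite negb_or; apply/andP; split.
    by apply/eqP => e; apply: hij; rewrite e.
  rewrite negb_or; apply/andP; split.
    by apply/eqP => e; apply: hf1; rewrite /follows e.
  apply/eqP => e; apply: hf2; rewrite /follows e /= modP1 //.
have := cardsC X; rewrite card_ord hX => e.
apply: leq_trans (subset_leq_card sub) _; lia.
Qed.

Lemma count_all n : 3 <= n ->
  #|[set p : 'I_n * 'I_n | `[< nonadjacent n p.1 p.2 >]]| <= n * (n - 3).
Proof.
move=> n3.
rewrite -sum1dep_card -(pair_big_dep xpredT (fun i j : 'I_n => `[< nonadjacent n i j >]) (fun _ _ => 1)) /=.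
rewrite -[n in n * _]card_ord -sum_nat_const.
apply: leq_sum => i _.
by rewrite sum1dep_card; apply: count_row.
Qed.

Lemma count_cross (R : realType) (q : seq (P2 R)) : 3 <= size q ->
  (ncrossings q).*2 <= size q * (size q - 3).
Proof.
move=> n3; rewrite /ncrossings.
move: n3; set n := size q => n3.
set A := [set p : 'I_n * 'I_n | (p.1 < p.2) && `[< nonadjacent n p.1 p.2 >]].
set U := [set p : 'I_n * 'I_n | `[< nonadjacent n p.1 p.2 >]].
pose sw := fun p : 'I_n * 'I_n => (p.2, p.1).
have swK : cancel sw sw by case.
have SA : #|[set p : 'I_n * 'I_n | (p.1 < p.2) &&
    `[< nonadjacent n p.1 p.2 /\ exists x, edge2 q p.1 x /\ edge2 q p.2 x >]]%classic| <= #|A|.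
  apply: subset_leq_card; apply/fintype.subsetP => p; rewrite inE.
  move=> /= /andP [h1 /asboolP [h _]]; rewrite inE h1 /=; exact/asboolP.
have AU : A :|: (sw @: A) \subset U.
  apply/fintype.subsetP => p; rewrite finset.in_setU => /orP [|/imsetP [p' hp' ->]].
    by rewrite !inE => /andP [_ /asboolP h].
  move: hp'; rewrite !inE => /andP [_ /asboolP h].
  exact: nonadj_sym h.
have dis : A :&: (sw @: A) = finset.set0.
  apply/finset.setP => p; rewrite !inE; apply/negP => /andP [/andP [h1 _] /imsetP [p' hp' e]].
  move: hp'; rewrite !inE => /andP [h2 _]; move: h1; rewrite e /=; lia.
have := cardsUI A (sw @: A); rewrite dis cards0 addn0 card_imset; last exact: can_inj swK.
move=> e; rewrite -addnn; apply: leq_trans (leq_add SA SA) _.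
rewrite -e; apply: leq_trans (subset_leq_card AU) _; exact: count_all.
Qed.
End Count.

Lemma real_bound (R : realType) (c : R) (m N : nat) :
  c <= m%:R -> (m.*2 <= N * (N - 3))%N -> (3 <= N)%N ->
  (3 + Num.sqrt (9 + 8 * c)) / 2 <= N%:R.
Proof.
move=> hc hm hN.
have hm' : (m.*2)%:R <= (N * (N - 3))%:R :> R by rewrite ler_nat.
rewrite -muln2 !natrM natrB // in hm'.
have N3 : (3 : R) <= N%:R by rewrite (ler_nat R 3 N).
have hs : Num.sqrt (9 + 8 * c) <= 2 * N%:R - 3.
  have -> : 2 * N%:R - 3 = Num.sqrt ((2 * N%:R - 3) ^+ 2) :> R.
    by rewrite sqrtr_sqr ger0_norm //; lra.
  apply: ler_wsqrtr.
  rewrite expr2; nra.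
lra.
Qed.

Lemma diag_bound (R : realType) (K : seq (P3 R)) (q : seq (P2 R)) (h : nat -> R -> R) :
  stick_diagram_of K q h ->
  (3 + Num.sqrt (9 + 8 * crossing_number K)) / 2 <= (size q)%:R.
Proof.
move=> D.
have n3 : (3 <= size q)%N by case: D => [[]].
apply: (real_bound _ (count_cross n3) n3).
apply: ge_inf.
  exists 0 => x [q' [h' [_ ->]]]; exact: ler0n.
by exists q, h.
Qed.

Theorem theorem2p2 (R : realType) (K : seq (P3 R)) :
  PL_knot K ->
  (3 + Num.sqrt (9 + 8 * crossing_number K)) / 2 <= planar_stick_index K.
Proof.
move=> HK.
have [a [b Hab]] := choose_dir (size K) (fun i => vtx3 K i) (fun i => sub3 (vtx3 K i.+1) (vtx3 K i)).
have D := @diag R K HK a b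
  (fun i hi => let: And3 h _ _ := Hab i i i hi hi hi in h)
  (fun j k hj hk => let: And3 _ h _ := Hab j j k hj hj hk in h)
  (fun i j k hi hj hk => let: And3 _ _ h := Hab i j k hi hj hk in h).
apply: lb_le_inf.
  by exists (size (qd K a b))%:R, (qd K a b), (hd K).
by move=> x [q [h [Dq ->]]]; exact: diag_bound Dq.
Qed.
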